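(* Let $h\in\mathcal{C}^\infty(\mathbb{R},\mathbb{R})$ and $\alpha\in\mathbb{R}$. Let $\phi,F\in\mathcal{C}^\infty(\mathbb{R}^3,\mathbb{R})$ be functions of $(t,x,y)$, and set $\psi=(\psi_1,\psi_2)=0$. Assume that \[ \cos\alpha\,\frac{\partial\phi}{\partial t}+\cos\alpha\,\frac{\partial\phi}{\partial x}+\sin\alpha\,\frac{\partial\phi}{\partial y}=\sin\alpha\,F,\qquad \sin\alpha\,\frac{\partial\phi}{\partial t}-\sin\alpha\,\frac{\partial\phi}{\partial x}+\cos\alpha\,\frac{\partial\phi}{\partial y}=-\cos\alpha\,F, \] and $F+h'(\phi)=0$ (these are the component form of the conditions $(\cos\alpha\,\tau_1+\sin\alpha\,\tau_2)\Phi=0$, $\psi=0$, $F+h'(\phi)=0$ for the superfield $\Phi=\phi+\theta^1\psi_1+\theta^2\psi_2+\theta^1\theta^2F$ on $\mathbb{R}^{3|2}$). Then $(\phi,\psi,F)$ solves the Euler--Lagrange system \[ \square\phi+h''(\phi)h'(\phi)+h'''(\phi)\psi_1\psi_2=0,\qquad \mathcal{D}\psi-h''(\phi)\psi=0,\qquad F+h'(\phi)=0; \] in particular $\square\phi+h''(\phi)h'(\phi)=0$.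
   Context: $\square:=\frac{\partial^2}{\partial t^2}-\frac{\partial^2}{\partial x^2}-\frac{\partial^2}{\partial y^2}$. On $\mathbb{R}^{3|2}$ with even coordinates $t,x,y$ and odd coordinates $\theta^1,\theta^2$, $\tau_1=\partial_{\theta^1}+\theta^1(\partial_t+\partial_x)+\theta^2\partial_y$ and $\tau_2=\partial_{\theta^2}+\theta^1\partial_y+\theta^2(\partial_t-\partial_x)$. With $\partial_{11}=\partial_t+\partial_x$, $\partial_{22}=\partial_t-\partial_x$, $\partial_{12}=\partial_{21}=\partial_y$, the operator $\mathcal{D}$ acts on pairs $\psi=(\psi_1,\psi_2)$ by $(\mathcal{D}\psi)_1=\partial_{12}\psi_1-\partial_{11}\psi_2$, $(\mathcal{D}\psi)_2=\partial_{22}\psi_1-\partial_{12}\psi_2$. The Euler--Lagrange system above is that of the action $\int d^3x\,d^2\theta\,(\tfrac14\epsilon^{ab}D_a\Phi D_b\Phi+\Phi^*h)$. *)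

(* Defs.v *)
From Stdlib Require Import Reals List.
From Coquelicot Require Import Coquelicot.
Open Scope R_scope.

Definition fn3 := R -> R -> R -> R.

(* Partial derivative in direction i: 0 = t, 1 = x, otherwise y. *)
Definition pd (i : nat) (f : fn3) : fn3 :=
  match i with
  | O => fun t x y => Derive (fun s => f s x y) t
  | 1%nat => fun t x y => Derive (fun s => f t s y) x
  | _ => fun t x y => Derive (fun s => f t x s) y
  end.

Definition ex_pd (i : nat) (f : fn3) (t x y : R) : Prop :=
  match i with
  | O => ex_derive (fun s => f s x y) t
  | 1%nat => ex_derive (fun s => f t s y) x
  | _ => ex_derive (fun s => f t x s) y
  end.

Definition iter_pd (l : list nat) (f : fn3) : fn3 := fold_right pd f l.

Definition continuous3 (g : fn3) : Prop :=
  forall t x y eps, 0 < eps -> exists delta, 0 < delta /\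
    forall t' x' y', Rabs (t' - t) < delta -> Rabs (x' - x) < delta ->
      Rabs (y' - y) < delta -> Rabs (g t' x' y' - g t x y) < eps.

Definition smooth3 (f : fn3) : Prop :=
  forall l : list nat,
    continuous3 (iter_pd l f) /\
    forall i t x y, ex_pd i (iter_pd l f) t x y.

Definition smooth1 (h : R -> R) : Prop :=
  forall (n : nat) (x : R), ex_derive_n h n x.

Definition box (f : fn3) : fn3 :=
  fun t x y => pd 0 (pd 0 f) t x y - pd 1 (pd 1 f) t x y - pd 2 (pd 2 f) t x y.

Definition d11 (f : fn3) : fn3 := fun t x y => pd 0 f t x y + pd 1 f t x y.
Definition d22 (f : fn3) : fn3 := fun t x y => pd 0 f t x y - pd 1 f t x y.
Definition d12 (f : fn3) : fn3 := fun t x y => pd 2 f t x y.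

Definition Dop1 (psi1 psi2 : fn3) : fn3 :=
  fun t x y => d12 psi1 t x y - d11 psi2 t x y.
Definition Dop2 (psi1 psi2 : fn3) : fn3 :=
  fun t x y => d22 psi1 t x y - d12 psi2 t x y.

(* Main.v *)
Require Import Defs.
From Stdlib Require Import Reals Lra List FunctionalExtensionality.
From Coquelicot Require Import Coquelicot.
Open Scope R_scope.

Lemma lin1 a b c (u v w : R -> R) z :
  ex_derive u z -> ex_derive v z -> ex_derive w z ->
  Derive (fun s => a * u s + b * v s + c * w s) z
  = a * Derive u z + b * Derive v z + c * Derive w z.
Proof.
  intros Hu Hv Hw.
  apply is_derive_unique.
  apply (is_derive_plus (fun s => a * u s + b * v s) (fun s => c * w s)).
  - apply (is_derive_plus (fun s => a * u s) (fun s => b * v s)).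
    + apply is_derive_scal. apply Derive_correct; exact Hu.
    + apply is_derive_scal. apply Derive_correct; exact Hv.
  - apply is_derive_scal. apply Derive_correct; exact Hw.
Qed.

Lemma pd_lin k a b c (f g h : fn3) t x y :
  ex_pd k f t x y -> ex_pd k g t x y -> ex_pd k h t x y ->
  pd k (fun t x y => a * f t x y + b * g t x y + c * h t x y) t x y
  = a * pd k f t x y + b * pd k g t x y + c * pd k h t x y.
Proof.
  destruct k as [|[|k]]; cbn [pd ex_pd]; intros Hf Hg Hh; apply lin1; assumption.
Qed.

Lemma pd_scal k a (f : fn3) t x y :
  pd k (fun t x y => a * f t x y) t x y = a * pd k f t x y.
Proof. destruct k as [|[|k]]; cbn [pd]; apply Derive_scal. Qed.

Lemma chain1 (h : R -> R) (u : R -> R) z :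
  smooth1 h -> ex_derive u z ->
  Derive (fun s => - Derive h (u s)) z = - Derive_n h 2 (u z) * Derive u z.
Proof.
  intros Hh Hu.
  apply is_derive_unique.
  replace (- Derive_n h 2 (u z) * Derive u z) with (- (Derive u z * Derive (Derive h) (u z))) by (change (Derive_n h 2 (u z)) with (Derive (Derive h) (u z)); ring).
  apply (is_derive_opp (fun s => Derive h (u s)) z (Derive u z * Derive (Derive h) (u z))).
  apply (is_derive_comp (Derive h) u).
  - apply Derive_correct. exact (Hh 2%nat (u z)).
  - apply Derive_correct; exact Hu.
Qed.

Lemma pd_chain k (h : R -> R) (phi : fn3) t x y :
  smooth1 h -> ex_pd k phi t x y ->
  pd k (fun t x y => - Derive h (phi t x y)) t x y
  = - Derive_n h 2 (phi t x y) * pd k phi t x y.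
Proof.
  intros Hh Hp.
  destruct k as [|[|k]]; cbn [pd ex_pd] in *; [exact (chain1 h (fun s => phi s x y) t Hh Hp) | exact (chain1 h (fun s => phi t s y) x Hh Hp) | exact (chain1 h (fun s => phi t x s) y Hh Hp)].
Qed.

Lemma cont_fix (g : fn3) (i : nat) t x y :
  continuous3 g ->
  continuity_2d_pt (fun u v => match i with
                                | O => g u v y
                                | 1%nat => g u x v
                                | _ => g t u v end)
    (match i with O => t | 1%nat => t | _ => x end)
    (match i with O => x | 1%nat => y | _ => y end).
Proof.
  intros Hc eps.
  destruct (Hc t x y eps (cond_pos eps)) as [d [Hd H]].
  exists (mkposreal d Hd); simpl; intros u v Hu Hv.
  assert (Z : forall z, Rabs (z - z) < d) by (intro z; rewrite Rminus_diag, Rabs_R0; exact Hd).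
  destruct i as [|[|i]]; apply H; auto.
Qed.

Section S.
Variables (phi : fn3).
Hypothesis Hs : smooth3 phi.

Lemma exp1 j k t x y : ex_pd k (pd j phi) t x y.
Proof. exact (proj2 (Hs (j :: nil)) k t x y). Qed.
Lemma exp0 k t x y : ex_pd k phi t x y.
Proof. exact (proj2 (Hs nil) k t x y). Qed.
Lemma cont2 i j : continuous3 (pd i (pd j phi)).
Proof. exact (proj1 (Hs (i :: j :: nil))). Qed.

Lemma sw01 t x y : pd 0 (pd 1 phi) t x y = pd 1 (pd 0 phi) t x y.
Proof.
  cbn [pd]. apply (Schwarz (fun u v => phi u v y) t x).
  - exists (mkposreal 1 Rlt_0_1); intros u v _ _.
    pose proof (exp0 0 u v y); pose proof (exp0 1 u v y);
    pose proof (exp1 1 0 u v y); pose proof (exp1 0 1 u v y); cbn [pd ex_pd] in *.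
    split; [assumption|split;[assumption|split;assumption]].
  - exact (cont_fix _ 0 t x y (cont2 0 1)).
  - exact (cont_fix _ 0 t x y (cont2 1 0)).
Qed.

Lemma sw02 t x y : pd 0 (pd 2 phi) t x y = pd 2 (pd 0 phi) t x y.
Proof.
  cbn [pd]. apply (Schwarz (fun u v => phi u x v) t y).
  - exists (mkposreal 1 Rlt_0_1); intros u v _ _.
    pose proof (exp0 0 u x v); pose proof (exp0 2 u x v);
    pose proof (exp1 2 0 u x v); pose proof (exp1 0 2 u x v); cbn [pd ex_pd] in *.
    split; [assumption|split;[assumption|split;assumption]].
  - exact (cont_fix _ 1 t x y (cont2 0 2)).
  - exact (cont_fix _ 1 t x y (cont2 2 0)).
Qed.

Lemma sw12 t x y : pd 1 (pd 2 phi) t x y = pd 2 (pd 1 phi) t x y.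
Proof.
  cbn [pd]. apply (Schwarz (fun u v => phi t u v) x y).
  - exists (mkposreal 1 Rlt_0_1); intros u v _ _.
    pose proof (exp0 1 t u v); pose proof (exp0 2 t u v);
    pose proof (exp1 2 1 t u v); pose proof (exp1 1 2 t u v); cbn [pd ex_pd] in *.
    split; [assumption|split;[assumption|split;assumption]].
  - exact (cont_fix _ 2 t x y (cont2 1 2)).
  - exact (cont_fix _ 2 t x y (cont2 2 1)).
Qed.
End S.

Lemma box_main (h : R -> R) (alpha : R) (phi F : fn3) :
  smooth1 h -> smooth3 phi ->
  (forall t x y,
     cos alpha * pd 0 phi t x y + cos alpha * pd 1 phi t x y
       + sin alpha * pd 2 phi t x y = sin alpha * F t x y) ->
  (forall t x y,
     sin alpha * pd 0 phi t x y - sin alpha * pd 1 phi t x y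
       + cos alpha * pd 2 phi t x y = - cos alpha * F t x y) ->
  (forall t x y, F t x y + Derive h (phi t x y) = 0) ->
  forall t x y,
     box phi t x y + Derive_n h 2 (phi t x y) * Derive h (phi t x y) = 0.
Proof.
  intros Hh Hp E1 E2 EF t x y.
  assert (CS : sin alpha * sin alpha + cos alpha * cos alpha = 1)
    by (pose proof (sin2_cos2 alpha) as K; unfold Rsqr in K; exact K).
  assert (FF : F = fun t x y => - Derive h (phi t x y)).
  { do 3 (apply functional_extensionality; intro). specialize (EF x0 x1 x2); lra. }
  subst F.
  set (c := cos alpha) in *; set (s := sin alpha) in *.
  assert (L1 : (fun t x y => c * pd 0 phi t x y + c * pd 1 phi t x y + s * pd 2 phi t x y)
             = (fun t x y => s * - Derive h (phi t x y))).
  { do 3 (apply functional_extensionality; intro). apply E1. }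
  assert (L2 : (fun t x y => s * pd 0 phi t x y + (- s) * pd 1 phi t x y + c * pd 2 phi t x y)
             = (fun t x y => (- c) * - Derive h (phi t x y))).
  { do 3 (apply functional_extensionality; intro). rewrite <- (E2 x0 x1 x2). ring. }
  assert (D1 : forall k, c * pd k (pd 0 phi) t x y + c * pd k (pd 1 phi) t x y
                        + s * pd k (pd 2 phi) t x y
                        = s * (- Derive_n h 2 (phi t x y) * pd k phi t x y)).
  { intro k. rewrite <- (pd_lin k c c s (pd 0 phi) (pd 1 phi) (pd 2 phi) t x y
        (exp1 _ Hp _ _ _ _ _) (exp1 _ Hp _ _ _ _ _) (exp1 _ Hp _ _ _ _ _)).
    rewrite L1.
    rewrite (pd_scal k s (fun t x y => - Derive h (phi t x y))).
    rewrite (pd_chain k h phi t x y Hh (exp0 _ Hp _ _ _ _)). reflexivity. }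
  assert (D2 : forall k, s * pd k (pd 0 phi) t x y + (- s) * pd k (pd 1 phi) t x y
                        + c * pd k (pd 2 phi) t x y
                        = (- c) * (- Derive_n h 2 (phi t x y) * pd k phi t x y)).
  { intro k. rewrite <- (pd_lin k s (-s) c (pd 0 phi) (pd 1 phi) (pd 2 phi) t x y
        (exp1 _ Hp _ _ _ _ _) (exp1 _ Hp _ _ _ _ _) (exp1 _ Hp _ _ _ _ _)).
    rewrite L2.
    rewrite (pd_scal k (-c) (fun t x y => - Derive h (phi t x y))).
    rewrite (pd_chain k h phi t x y Hh (exp0 _ Hp _ _ _ _)). reflexivity. }
  pose proof (E1 t x y) as e1. pose proof (E2 t x y) as e2.
  pose proof (D1 0%nat) as d10. pose proof (D1 1%nat) as d11. pose proof (D1 2%nat) as d12.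
  pose proof (D2 0%nat) as d20. pose proof (D2 1%nat) as d21. pose proof (D2 2%nat) as d22.
  pose proof (sw01 _ Hp t x y) as s01. pose proof (sw02 _ Hp t x y) as s02.
  pose proof (sw12 _ Hp t x y) as s12.
  unfold box.
  rewrite s01 in d10, d20. rewrite s02 in d10, d20.
  rewrite s12 in d11, d21.
  clear - CS e1 e2 d10 d11 d12 d20 d21 d22.
  set (H2 := Derive_n h 2 (phi t x y)) in *.
  set (G := Derive h (phi t x y)) in *.
  set (a00 := pd 0 (pd 0 phi) t x y) in *.
  set (a11 := pd 1 (pd 1 phi) t x y) in *.
  set (a22 := pd 2 (pd 2 phi) t x y) in *.
  set (a10 := pd 1 (pd 0 phi) t x y) in *.
  set (a20 := pd 2 (pd 0 phi) t x y) in *.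
  set (a21 := pd 2 (pd 1 phi) t x y) in *.
  set (p0 := pd 0 phi t x y) in *. set (p1 := pd 1 phi t x y) in *.
  set (p2 := pd 2 phi t x y) in *.
  transitivity ((s*s+c*c) * (a00 - a11 - a22 + H2 * G)); [rewrite CS; ring|].
  transitivity (c * (c*a00 + c*a10 + s*a20 - s*(-H2*p0))
              + s * (s*a00 + -s*a10 + c*a20 - -c*(-H2*p0))
              - c * (c*a10 + c*a11 + s*a21 - s*(-H2*p1))
              + s * (s*a10 + -s*a11 + c*a21 - -c*(-H2*p1))
              - s * (c*a20 + c*a21 + s*a22 - s*(-H2*p2))
              - c * (s*a20 + -s*a21 + c*a22 - -c*(-H2*p2))
              + H2 * (s * (c*p0 + c*p1 + s*p2 - s * (- G))
                      - c * (s*p0 - s*p1 + c*p2 - (- c) * (- G)))).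
  - ring.
  - rewrite d10, d20, d11, d21, d12, d22, e1, e2. ring.
Qed.
Theorem mainTheorem1 (h : R -> R) (alpha : R) (phi F : fn3) :
  smooth1 h -> smooth3 phi -> smooth3 F ->
  let psi1 : fn3 := fun _ _ _ => 0 in
  let psi2 : fn3 := fun _ _ _ => 0 in
  (forall t x y,
     cos alpha * pd 0 phi t x y + cos alpha * pd 1 phi t x y
       + sin alpha * pd 2 phi t x y = sin alpha * F t x y) ->
  (forall t x y,
     sin alpha * pd 0 phi t x y - sin alpha * pd 1 phi t x y
       + cos alpha * pd 2 phi t x y = - cos alpha * F t x y) ->
  (forall t x y, F t x y + Derive h (phi t x y) = 0) ->
  (forall t x y,
     box phi t x y + Derive_n h 2 (phi t x y) * Derive h (phi t x y)
       + Derive_n h 3 (phi t x y) * psi1 t x y * psi2 t x y = 0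
     /\ Dop1 psi1 psi2 t x y - Derive_n h 2 (phi t x y) * psi1 t x y = 0
     /\ Dop2 psi1 psi2 t x y - Derive_n h 2 (phi t x y) * psi2 t x y = 0
     /\ F t x y + Derive h (phi t x y) = 0)
  /\ (forall t x y,
     box phi t x y + Derive_n h 2 (phi t x y) * Derive h (phi t x y) = 0).
Proof.
  intros Hh Hp HF psi1 psi2 E1 E2 EF.
  pose proof (box_main h alpha phi F Hh Hp E1 E2 EF) as B.
  split; [|exact B].
  intros t x y. subst psi1 psi2.
  unfold Dop1, Dop2, d11, d12, d22; simpl; rewrite !Derive_const.
  repeat split.
  - rewrite !Rmult_0_r, Rplus_0_r; exact (B t x y).
  - ring.
  - ring.
  - apply EF.
Qed.
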